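(* Consider $\min_{x\in\mathbb{R}^p,z\in\mathbb{R}^N}F(x,z):=f(x,z)+g(x)+h(z)$, where: (i) $f$ is differentiable with $M$-Lipschitz joint gradient, i.e. $\|(\nabla_xf(x_1,z_1)-\nabla_xf(x_2,z_2),\nabla_zf(x_1,z_1)-\nabla_zf(x_2,z_2))\|\le M\|(x_1-x_2,z_1-z_2)\|$ for all arguments and some $M>0$, and $g:\mathbb{R}^p\to\mathbb{R}\cup\{\infty\}$, $h:\mathbb{R}^N\to\mathbb{R}\cup\{\infty\}$ are proper, lower semicontinuous and directionally differentiable; (ii) $F$ is bounded below; (iii) $g$ and $h$ are prox-bounded, i.e. $g+\frac\eta2\|\cdot\|^2$ and $h+\frac\eta2\|\cdot\|^2$ are bounded below for some $\eta>0$. Let $\{(x_t,z_t):t\ge0\}$ be generated by the following algorithm (GPALM), run indefinitely: fix an integer $r\ge1$, $\rho_1,\rho_2>1$, $\sigma_1,\sigma_2\in(0,1)$, $0<\underline\eta\le\overline\eta$, a starting point $(x_0,z_0)$, and $\hat\eta_0^x=\hat\eta_0^z=1$. At iteration $t$, for $l=0,1,2,\dots$ set $\eta_t^x=\rho_1^l\hat\eta_t^x$, $\eta_t^z=\rho_2^l\hat\eta_t^z$ and compute $$x_{t+1}\in\operatorname{Prox}_{g/\eta_t^x}\Big(x_t-\tfrac1{\eta_t^x}\nabla_xf(x_t,z_t)\Big),\quad z_{t+1}\in\operatorname{Prox}_{h/\eta_t^z}\Big(z_t-\tfrac1{\eta_t^z}\nabla_zf(x_{t+1},z_t)\Big),$$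 stopping at the first $l$ for which $$F(x_{t+1},z_{t+1})\le\max\{F(x_{t-r+1},z_{t-r+1}),\dots,F(x_t,z_t)\}-\tfrac{\sigma_1}2\eta_t^x\|x_{t+1}-x_t\|^2-\tfrac{\sigma_2}2\eta_t^z\|z_{t+1}-z_t\|^2$$ (only indices $\ge0$ in the maximum). Then set $$\hat\eta_{t+1}^x=\min\Big\{\overline\eta,\max\Big\{\underline\eta,\tfrac{\langle x_{t+1}-x_t,\nabla_xf(x_{t+1},z_{t+1})-\nabla_xf(x_t,z_t)\rangle}{\|x_{t+1}-x_t\|^2}\Big\}\Big\},$$ $$\hat\eta_{t+1}^z=\min\Big\{\overline\eta,\max\Big\{\underline\eta,\tfrac{\langle z_{t+1}-z_t,\nabla_zf(x_{t+1},z_{t+1})-\nabla_zf(x_{t+1},z_t)\rangle}{\|z_{t+1}-z_t\|^2}\Big\}\Big\}.$$ If the generated sequence is bounded and $F$ is continuous on a compact set containing the sequence, then $\lim_{t\to\infty}\|x_{t+1}-x_t\|=0$ and $\lim_{t\to\infty}\|z_{t+1}-z_t\|=0$.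
   Context: $\|\cdot\|$ is the Euclidean norm. $\operatorname{Prox}_{\phi/\eta}(y):=\operatorname{argmin}_u\{\tfrac1\eta\phi(u)+\tfrac12\|u-y\|^2\}$. The directional derivative is $\phi'(u;d):=\lim_{\tau\to+0}\frac{\phi(u+\tau d)-\phi(u)}{\tau}$ (possibly $+\infty$). *)

(* Defs.v *)
From HB Require Import structures.
From mathcomp Require Import all_boot all_order all_algebra.
From mathcomp Require Import all_classical all_reals all_analysis.
Set Implicit Arguments. Unset Strict Implicit. Unset Printing Implicit Defensive.
Import Order.TTheory GRing.Theory Num.Theory.
Import numFieldNormedType.Exports.
Local Open Scope classical_set_scope.
Local Open Scope ring_scope.

Section Defs.
Variable R : realType.

Definition dotv n (u v : 'rV[R]_n) : R := \sum_(i < n) u ord0 i * v ord0 i.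
Definition enorm n (u : 'rV[R]_n) : R := Num.sqrt (dotv u u).
Definition enorm2 p N (u : 'rV[R]_p) (v : 'rV[R]_N) : R :=
  Num.sqrt (enorm u ^+ 2 + enorm v ^+ 2).

Definition has_partial_grads p N (f : 'rV[R]_p -> 'rV[R]_N -> R)
  (gx : 'rV[R]_p -> 'rV[R]_N -> 'rV[R]_p) (gz : 'rV[R]_p -> 'rV[R]_N -> 'rV[R]_N) :=
  forall x z (e : R), 0 < e -> exists2 d : R, 0 < d &
    forall u v, enorm2 u v < d ->
      `| f (x + u) (z + v) - f x z - dotv (gx x z) u - dotv (gz x z) v |
        <= e * enorm2 u v.

Definition proper_fun n (g : 'rV[R]_n -> \bar R) :=
  (forall x, g x != -oo%E) /\ exists x, g x \is a fin_num.

Definition lsc_fun n (g : 'rV[R]_n -> \bar R) :=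
  forall x (a : \bar R), (a < g x)%E -> exists2 d : R, 0 < d &
    forall y, enorm (y - x) < d -> (a < g y)%E.

Definition dir_diff n (g : 'rV[R]_n -> \bar R) :=
  forall u d, g u \is a fin_num -> exists l : \bar R,
    (fun tau : R => ((g (u + tau *: d)%R - g u) * (tau^-1)%:E)%E) @ 0^'+ --> l.

Definition in_prox n (g : 'rV[R]_n -> \bar R) (eta : R) (y u : 'rV[R]_n) :=
  forall w, ((eta^-1)%:E * g u + (enorm (u - y) ^+ 2 / 2)%:E <=
             (eta^-1)%:E * g w + (enorm (w - y) ^+ 2 / 2)%:E)%E.

Definition Fobj p N (f : 'rV[R]_p -> 'rV[R]_N -> R) (g : 'rV[R]_p -> \bar R)
  (h : 'rV[R]_N -> \bar R) x z : \bar R := ((f x z)%:E + g x + h z)%E.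

(* max{F(x_{t-r+1},z_{t-r+1}),...,F(x_t,z_t)} over indices >= 0 *)
Definition Fmax p N (F : 'rV[R]_p -> 'rV[R]_N -> \bar R) (r : nat)
  (x : nat -> 'rV[R]_p) (z : nat -> 'rV[R]_N) (t : nat) : \bar R :=
  \big[Order.max/-oo%E]_(t.+1 - r <= i < t.+1) F (x i) (z i).

Definition clamp (etal etau a : R) : R := Num.min etau (Num.max etal a).

End Defs.

(* Main.v *)
Require Import Defs.
From HB Require Import structures.
From mathcomp Require Import all_boot all_order all_algebra.
From mathcomp Require Import all_classical all_reals all_analysis.
From mathcomp Require Import lra zify.
Import Order.TTheory GRing.Theory Num.Theory.
Import numFieldNormedType.Exports.
Local Open Scope classical_set_scope.
Local Open Scope ring_scope.
Section Aux.
Context {R : realType}.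

Lemma dotv_ge0 {n} (u : 'rV[R]_n) : 0 <= dotv u u.
Proof. by apply: sumr_ge0 => i _; rewrite -expr2 sqr_ge0. Qed.

Lemma enorm_ge0 {n} (u : 'rV[R]_n) : 0 <= enorm u.
Proof. exact: sqrtr_ge0. Qed.

Lemma enorm_sqr {n} (u : 'rV[R]_n) : enorm u ^+ 2 = dotv u u.
Proof. by rewrite /enorm sqr_sqrtr // dotv_ge0. Qed.

Lemma enorm_coord {n} (u : 'rV[R]_n) i : `|u ord0 i| <= enorm u.
Proof.
rewrite -sqrtr_sqr /enorm ler_sqrt ?dotv_ge0 // /dotv (bigD1 i) //= expr2.
by rewrite lerDl; apply: sumr_ge0 => j _; rewrite -expr2 sqr_ge0.
Qed.

Lemma enorm_ball {n} (u v : 'rV[R]_n) e : enorm (u - v) < e -> ball u e v.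
Proof.
move=> H; have e0 : 0 < e by apply: le_lt_trans H; exact: enorm_ge0.
split => // i j; rewrite (ord1 i).
have := enorm_coord (u - v) j.
rewrite !mxE => /le_lt_trans /(_ H).
by rewrite /ball /=.
Qed.

Lemma bigmax_attained (d : Order.disp_t) (T : orderType d) (x0 : T) (s : seq nat) (F : nat -> T) :
  s != [::] -> (forall i, (x0 <= F i)%O) ->
  exists2 i, i \in s & \big[Order.max/x0]_(i <- s) F i = F i.
Proof.
elim: s => // a s IH _ H; rewrite big_cons.
case: s IH => [|b s] IH.
  by exists a; rewrite ?mem_head // big_nil; apply: Order.POrderTheory.max_l; exact: H.
have [//|i Hi ->] := IH _ H.
case: (leP (F a) (F i)) => Hai.
  by exists i; rewrite // in_cons Hi orbT.
by exists a; rewrite // mem_head.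
Qed.
Lemma le_bigmax_mem (d : Order.disp_t) (T : orderType d) (x0 : T) (s : seq nat) (F : nat -> T) i :
  i \in s -> (F i <= \big[Order.max/x0]_(j <- s) F j)%O.
Proof. by move=> Hi; apply: le_bigmax_seq. Qed.
End Aux.

Lemma UC {R : realType} (p N : nat) (K : set ('rV[R]_p * 'rV[R]_N))
  (F : 'rV[R]_p * 'rV[R]_N -> \bar R) (w : nat -> 'rV[R]_p * 'rV[R]_N)
  (S : set nat) (B0 : R) :
  compact K -> {within K, continuous F} -> (forall i, S i -> K (w i)) ->
  (forall i, S i -> F (w i) = (fine (F (w i)))%:E /\ fine (F (w i)) <= B0) ->
  (forall q, F q != -oo%E) ->
  forall eps, 0 < eps -> exists2 dl, 0 < dl & forall i j, S i -> S j ->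
    enorm ((w i).1 - (w j).1) < dl -> enorm ((w i).2 - (w j).2) < dl ->
    `|fine (F (w i)) - fine (F (w j))| < eps.
Proof.
move=> cK cF SK SF Fny eps e0.
apply: contrapT => Hn.
pose Bad dl := [set y | exists i j, [/\ S i, S j,
   enorm ((w i).1 - (w j).1) < dl /\ enorm ((w i).2 - (w j).2) < dl,
   eps <= `|fine (F (w i)) - fine (F (w j))| & y = w i]].
have bad : forall dl, 0 < dl -> Bad dl !=set0.
  move=> dl dl0; apply: contrapT => nb; apply: Hn; exists dl => // i j Si Sj h1 h2.
  rewrite ltNge; apply/negP => H; apply: nb; exists (w i), i, j; split => //.
pose G := filter_from [set dl : R | 0 < dl] Bad.
have FG : Filter G.
  apply: filter_from_filter; first by exists 1%R => /=; exact: ltr01.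
  move=> d1 d2 d10 d20; exists (Num.min d1 d2); first by rewrite /= lt_min d10.
  move=> y [i [j [Si Sj [] + + h3 ->]]]; rewrite !lt_min => /andP[h1 h1'] /andP[h2 h2'].
  by split; exists i, j.
have PG : ProperFilter G by apply: filter_from_proper => // dl; exact: bad.
have GK : G K by exists 1 => //= y [i [j [Si _ _ _ ->]]]; exact: SK.
have [k [Kk clk]] := cK G PG GK.
have := (subspace_continuousP K F).1 cF k Kk.
have e20 : 0 < eps / 2 by rewrite divr_gt0.
have getpt : forall dl, 0 < dl -> exists i j, [/\ S i, S j, ball k dl (w i), ball k dl (w j)
   & eps <= `|fine (F (w i)) - fine (F (w j))|].
  move=> dl dl0; have dl20 : 0 < dl / 2 by rewrite divr_gt0.
  have [y [[i [j [Si Sj [h1 h2] h3 ->]]] Hy]] :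
    (Bad (dl/2) `&` ball k (dl/2)) !=set0.
    apply: clk; first by exists (dl/2).
    by apply/nbhs_ballP; exists (dl/2).
  exists i, j; split => //.
    by apply: le_ball Hy; rewrite ler_pdivrMr //; lra.
  rewrite [dl]splitr; apply: ball_triangle Hy _.
  by split; apply: enorm_ball.
case Fk: (F k) => [r| |] Hc.
- have /fine_cvgP [_ Hc'] := Hc.
  move/cvgrPdist_lt: Hc' => /(_ _ e20) /nbhs_ballP [dl dl0 Hb].
  have [i [j [Si Sj Hi Hj Hij]]] := getpt dl dl0.
  have := Hb _ Hi (SK _ Si); have := Hb _ Hj (SK _ Sj) => /= H1 H2.
  have := ler_distD r (fine (F (w i))) (fine (F (w j))).
  rewrite distrC in H2. move: Hij H1 H2; set a := `|_ - _|; set b := `|_ - _|; set c := `|_ - _|.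
  move=> *; lra.
- move/cvgeyPgt: Hc => /(_ B0) /nbhs_ballP [dl dl0 Hb].
  have [i [j [Si Sj Hi Hj Hij]]] := getpt dl dl0.
  have := Hb _ Hi (SK _ Si); have [-> H] := SF i Si.
  by rewrite lte_fin ltNge H.
- by move: (Fny k); rewrite Fk.
Qed.
Lemma core_bound {R : realType} (Fr W dx dz : nat -> R) (r : nat) (cc : R) :
  (1 <= r)%N -> 0 < cc ->
  (forall t i, (r <= t)%N -> (t.+1 - r <= i <= t)%N -> Fr i <= W t) ->
  (forall t, (r <= t)%N -> exists i, (t.+1 - r <= i <= t)%N /\ W t = Fr i) ->
  (forall t, (r <= t)%N -> Fr t.+1 <= W t - cc * dx t ^+ 2 - cc * dz t ^+ 2) ->
  (forall t, (r <= t)%N -> W t.+1 <= W t) /\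
  (forall t, (r <= t)%N -> W t <= W r) /\
  (forall i, (0 < i)%N -> Fr i <= W r).
Proof.
move=> r1 cc0 Wge Watt Dec.
have Wmono : forall t, (r <= t)%N -> W t.+1 <= W t.
  move=> t rt; have [i [Hi ->]] := Watt t.+1 (leqW rt).
  have [->|ne] := eqVneq i t.+1.
    have := Dec t rt; have := sqr_ge0 (dx t); have := sqr_ge0 (dz t).
    move=> *; nra.
  by apply: Wge => //; lia.
have Wle : forall t, (r <= t)%N -> W t <= W r.
  move=> t; elim: t => [|t IH] rt.
    by have -> : r = 0%N by lia.
  have [->|ne] := eqVneq r t.+1; first by [].
  by apply: le_trans (Wmono t _) (IH _); lia.
split => //; split => // i i0.
have [ir|ri] := leqP i r; first by apply: Wge => //; lia.
have -> : i = i.-1.+1 by lia.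
apply: le_trans (Wle i.-1 _); last by lia.
have := Dec i.-1 ltac:(lia); have := sqr_ge0 (dx i.-1); have := sqr_ge0 (dz i.-1).
move=> *; nra.
Qed.

Lemma core {R : realType} (Fr W dx dz : nat -> R) (r : nat) (cc c0 : R) :
  (1 <= r)%N -> 0 < cc ->
  (forall t i, (r <= t)%N -> (t.+1 - r <= i <= t)%N -> Fr i <= W t) ->
  (forall t, (r <= t)%N -> exists i, (t.+1 - r <= i <= t)%N /\ W t = Fr i) ->
  (forall t, (r <= t)%N -> Fr t.+1 <= W t - cc * dx t ^+ 2 - cc * dz t ^+ 2) ->
  (forall i, (0 < i)%N -> c0 <= Fr i) ->
  (forall t, 0 <= dx t) -> (forall t, 0 <= dz t) ->
  (forall eps, 0 < eps -> exists2 dl, 0 < dl & forall i, (0 < i)%N ->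
      dx i < dl -> dz i < dl -> `|Fr i.+1 - Fr i| < eps) ->
  forall eps, 0 < eps -> exists N, forall t, (N <= t)%N -> dx t < eps /\ dz t < eps.
Proof.
move=> r1 cc0 Wge Watt Dec Flb dx0 dz0 UCf.
have [Wmono [Wle Fub]] := @core_bound _ Fr W dx dz r cc r1 cc0 Wge Watt Dec.
pose Ws := [set W (n + r)%N | n in [set: nat]].
have Wlb : forall t, (r <= t)%N -> c0 <= W t.
  move=> t rt; have [i [Hi ->]] := Watt t rt; apply: Flb; lia.
have hinf : has_inf Ws.
  split; first by exists (W (0 + r)%N), 0%N.
  by exists c0 => _ [n _ <-]; apply: Wlb; lia.
set Vs := inf Ws.
have VL : forall t, (r <= t)%N -> Vs <= W t.
  move=> t rt; apply: (ge_inf hinf.2); exists (t - r)%N => //; congr W; lia.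
have VU : forall eps, 0 < eps -> exists N, (r <= N)%N /\ forall t, (N <= t)%N -> W t < Vs + eps.
  move=> eps e0; have [_ [n _ <-] Hn] := inf_adherent e0 hinf.
  exists (n + r)%N; split; first by lia.
  move=> t; elim: t => [|t IH] Ht.
    by have -> : 0%N = (n + r)%N by lia.
  have [E|ne] := eqVneq (n + r)%N t.+1; first by rewrite -E.
  apply: le_lt_trans (Wmono t _) (IH _); lia.
pose mx t i := (t.+1 - r <= i <= t)%N /\ W t = Fr i.
have G : forall j eps, 0 < eps -> exists N, forall t i, (N <= t)%N -> mx t i ->
    `|Fr (i - j)%N - Vs| < eps.
  elim=> [|j IH] eps e0.
    have [N [rN HN]] := VU eps e0; exists N => t i Nt [Hi Wi].
    rewrite subn0 -Wi ger0_norm; last by rewrite subr_ge0 VL //; lia.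
    have := HN t Nt; lra.
  have e20 : 0 < eps / 2 by rewrite divr_gt0.
  have [dl dl0 Hdl] := UCf _ e20.
  pose eta := cc * (Num.min dl 1) ^+ 2 / 4.
  have m0 : 0 < Num.min dl 1 by rewrite lt_min dl0 ltr01.
  have eta0 : 0 < eta by rewrite /eta !mulr_gt0 // exprn_gt0.
  have [N1 HN1] := IH _ eta0.
  have [N2 HN2] := IH _ e20.
  have [NV [rNV HNV]] := VU _ eta0.
  exists (N1 + N2 + NV + 3 * r + j + 2)%N => t i Nt [Hi Wi].
  set k := (i - j.+1)%N.
  have kE : (i - j)%N = k.+1 by rewrite /k; lia.
  have k1 : (0 < k)%N by rewrite /k; lia.
  have H1 := HN1 t i ltac:(lia) (conj Hi Wi).
  have H2 := HN2 t i ltac:(lia) (conj Hi Wi).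
  rewrite kE in H1 H2.
  have Dk := Dec k ltac:(rewrite /k; lia).
  have WV := HNV k ltac:(rewrite /k; lia).
  have dd : dx k < Num.min dl 1 /\ dz k < Num.min dl 1.
    move: H1; rewrite ltr_norml => /andP[H1a H1b].
    rewrite /eta in WV H1a H1b; move: WV H1a H1b Dk m0.
    set m := Num.min dl 1 => WV H1a H1b Dk m0.
    have := mulr_ge0 (ltW cc0) (sqr_ge0 (dx k)).
    have := mulr_ge0 (ltW cc0) (sqr_ge0 (dz k)) => hz hx.
    have sx : cc * dx k ^+ 2 < cc * m ^+ 2 by lra.
    have sz : cc * dz k ^+ 2 < cc * m ^+ 2 by lra.
    rewrite ltr_pM2l // in sx; rewrite ltr_pM2l // in sz.
    have := dx0 k; have := dz0 k.
    by move=> *; split; rewrite ltNge; apply/negP => Hc; nra.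
  have [dxk dzk] := dd.
  have mdl : Num.min dl 1 <= dl by rewrite ge_min lexx.
  have := Hdl k k1 (lt_le_trans dxk mdl) (lt_le_trans dzk mdl).
  move: H2; rewrite -/k; set a := Fr k.+1; set b := Fr k.
  rewrite !ltr_norml => /andP[? ?] /andP[? ?]; apply/andP; split; lra.
have D : forall j eps, 0 < eps -> exists N, forall t i, (N <= t)%N -> mx t i ->
    dx (i - j.+1)%N < eps /\ dz (i - j.+1)%N < eps.
  move=> j eps e0.
  pose eta := cc * eps ^+ 2 / 4.
  have eta0 : 0 < eta by rewrite /eta !mulr_gt0 // exprn_gt0.
  have [N1 HN1] := G j _ eta0.
  have [NV [rNV HNV]] := VU _ eta0.
  exists (N1 + NV + 3 * r + j + 2)%N => t i Nt [Hi Wi].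
  set k := (i - j.+1)%N.
  have kE : (i - j)%N = k.+1 by rewrite /k; lia.
  have H1 := HN1 t i ltac:(lia) (conj Hi Wi).
  rewrite kE in H1.
  have Dk := Dec k ltac:(rewrite /k; lia).
  have WV := HNV k ltac:(rewrite /k; lia).
  move: H1; rewrite ltr_norml => /andP[H1a H1b].
  rewrite /eta in WV H1a H1b.
  have := mulr_ge0 (ltW cc0) (sqr_ge0 (dx k)).
  have := mulr_ge0 (ltW cc0) (sqr_ge0 (dz k)) => hz hx.
  have sx : cc * dx k ^+ 2 < cc * eps ^+ 2 by lra.
  have sz : cc * dz k ^+ 2 < cc * eps ^+ 2 by lra.
  rewrite ltr_pM2l // in sx; rewrite ltr_pM2l // in sz.
  have := dx0 k; have := dz0 k.
  by move=> *; split; rewrite ltNge; apply/negP => Hc; nra.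
move=> eps e0.
have A : forall n, exists N, forall j, (j < n)%N -> forall t i, (N <= t)%N -> mx t i ->
    dx (i - j.+1)%N < eps /\ dz (i - j.+1)%N < eps.
  elim=> [|n [N HN]]; first by exists 0%N.
  have [N' HN'] := D n eps e0.
  exists (N + N')%N => j jn t i Nt Hm.
  case: (ltnP j n) => jn'; first by apply: (HN j jn' t i _ Hm); lia.
  have -> : j = n by lia.
  by apply: (HN' t i _ Hm); lia.
have [N HN] := A r.
exists N => t Nt.
have [i [Hi Wi]] := Watt (t + r)%N ltac:(lia).
have := HN (i - t.+1)%N ltac:(lia) (t + r)%N i ltac:(lia) (conj Hi Wi).
by have -> : (i - (i - t.+1).+1)%N = t by lia.
Qed.

Lemma prox_fin {R : realType} {n} {g : 'rV[R]_n -> \bar R} {eta y u} :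
  proper_fun g -> 0 < eta -> in_prox g eta y u -> g u \is a fin_num.
Proof.
move=> [gny [w gw]] eta0 H; have := H w.
case gu: (g u) => [a| |] //; last by move: (gny u); rewrite gu.
by rewrite -(fineK gw) -EFinM -EFinD mulry gtr0_sg ?invr_gt0 // mul1e addye.
Qed.
Theorem lemma3 (R : realType) (p N : nat)
  (f : 'rV[R]_p -> 'rV[R]_N -> R)
  (gx : 'rV[R]_p -> 'rV[R]_N -> 'rV[R]_p) (gz : 'rV[R]_p -> 'rV[R]_N -> 'rV[R]_N)
  (g : 'rV[R]_p -> \bar R) (h : 'rV[R]_N -> \bar R) (M : R)
  (* (i) *)
  (Hgrad : has_partial_grads f gx gz)
  (HM : 0 < M)
  (Hlip : forall x1 z1 x2 z2,
      enorm2 (gx x1 z1 - gx x2 z2) (gz x1 z1 - gz x2 z2) <= M * enorm2 (x1 - x2) (z1 - z2))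
  (Hgprop : proper_fun g) (Hhprop : proper_fun h)
  (Hglsc : lsc_fun g) (Hhlsc : lsc_fun h)
  (Hgdd : dir_diff g) (Hhdd : dir_diff h)
  (* (ii) *)
  (HFbdd : exists c : R, forall x z, (c%:E <= Fobj f g h x z)%E)
  (* (iii) *)
  (Hproxb : exists2 eta : R, 0 < eta &
      (exists c : R, forall x, (c%:E <= g x + (eta / 2 * enorm x ^+ 2)%:E)%E) /\
      (exists c : R, forall z, (c%:E <= h z + (eta / 2 * enorm z ^+ 2)%:E)%E))
  (* algorithm parameters *)
  (r : nat) (rho1 rho2 sigma1 sigma2 etal etau : R)
  (Hr : (1 <= r)%N) (Hrho1 : 1 < rho1) (Hrho2 : 1 < rho2)
  (Hs1 : 0 < sigma1 < 1) (Hs2 : 0 < sigma2 < 1)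
  (Heta : 0 < etal <= etau)
  (* generated sequences: iterates, step-size guesses, accepted backtracking
     index l_t, and trial points of the inner loop *)
  (x : nat -> 'rV[R]_p) (z : nat -> 'rV[R]_N) (hx hz : nat -> R)
  (l : nat -> nat) (xt : nat -> nat -> 'rV[R]_p) (zt : nat -> nat -> 'rV[R]_N)
  (Hhx0 : hx 0%N = 1) (Hhz0 : hz 0%N = 1)
  (Hprox : forall t k, (k <= l t)%N ->
      in_prox g (rho1 ^+ k * hx t)
        (x t - (rho1 ^+ k * hx t)^-1 *: gx (x t) (z t)) (xt t k) /\
      in_prox h (rho2 ^+ k * hz t)
        (z t - (rho2 ^+ k * hz t)^-1 *: gz (xt t k) (z t)) (zt t k))
  (Hfail : forall t k, (k < l t)%N ->
      ~ (Fobj f g h (xt t k) (zt t k) <=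
         Fmax (Fobj f g h) r x z t
         - (sigma1 / 2 * (rho1 ^+ k * hx t) * enorm (xt t k - x t) ^+ 2)%:E
         - (sigma2 / 2 * (rho2 ^+ k * hz t) * enorm (zt t k - z t) ^+ 2)%:E)%E)
  (Hacc : forall t,
      (Fobj f g h (xt t (l t)) (zt t (l t)) <=
         Fmax (Fobj f g h) r x z t
         - (sigma1 / 2 * (rho1 ^+ l t * hx t) * enorm (xt t (l t) - x t) ^+ 2)%:E
         - (sigma2 / 2 * (rho2 ^+ l t * hz t) * enorm (zt t (l t) - z t) ^+ 2)%:E)%E)
  (Hxnext : forall t, x t.+1 = xt t (l t))
  (Hznext : forall t, z t.+1 = zt t (l t))
  (Hhxnext : forall t,
      (x t.+1 != x t ->
       hx t.+1 = clamp etal etau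
         (dotv (x t.+1 - x t) (gx (x t.+1) (z t.+1) - gx (x t) (z t))
          / enorm (x t.+1 - x t) ^+ 2)) /\
      (x t.+1 = x t -> etal <= hx t.+1 <= etau))
  (Hhznext : forall t,
      (z t.+1 != z t ->
       hz t.+1 = clamp etal etau
         (dotv (z t.+1 - z t) (gz (x t.+1) (z t.+1) - gz (x t.+1) (z t))
          / enorm (z t.+1 - z t) ^+ 2)) /\
      (z t.+1 = z t -> etal <= hz t.+1 <= etau))
  (* the sequence is bounded, and F is continuous on a compact set containing it *)
  (Hbdd : exists B : R, forall t, enorm (x t) <= B /\ enorm (z t) <= B)
  (HK : exists K : set ('rV[R]_p * 'rV[R]_N),
      [/\ compact K, (forall t, K (x t, z t)) &
          {within K, continuous (fun q => Fobj f g h q.1 q.2)}]) :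
  (fun t => enorm (x t.+1 - x t)) @ \oo --> (0 : R) /\
  (fun t => enorm (z t.+1 - z t)) @ \oo --> (0 : R).
Proof.
set Fo := Fobj f g h.
have [etal0 etalu] := andP Heta.
pose m := Num.min etal 1.
have m0 : 0 < m by rewrite lt_min etal0 ltr01.
have clampge : forall a, m <= clamp etal etau a.
  have mle : m <= etal by rewrite /m ge_min lexx.
  move=> a; rewrite /clamp le_min; apply/andP; split; first exact: le_trans mle etalu.
  by apply: le_trans mle _; rewrite le_max lexx.
have hxlb : forall t, m <= hx t.
  case=> [|t]; first by rewrite Hhx0 /m ge_min lexx orbT.
  have [Hn Heq] := Hhxnext t; case: (eqVneq (x t.+1) (x t)) => E.
  - by have /andP[H _] := Heq E; rewrite /m ge_min H.
  - by rewrite (Hn E).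
have hzlb : forall t, m <= hz t.
  case=> [|t]; first by rewrite Hhz0 /m ge_min lexx orbT.
  have [Hn Heq] := Hhznext t; case: (eqVneq (z t.+1) (z t)) => E.
  - by have /andP[H _] := Heq E; rewrite /m ge_min H.
  - by rewrite (Hn E).
have rho10 : 0 < rho1 by apply: lt_trans Hrho1.
have rho20 : 0 < rho2 by apply: lt_trans Hrho2.
have gfin : forall t, g (x t.+1) \is a fin_num.
  move=> t; rewrite Hxnext; apply: (prox_fin Hgprop _ (Hprox t (l t) (leqnn _)).1).
  by apply: mulr_gt0; [exact: exprn_gt0 | exact: lt_le_trans m0 (hxlb t)].
have hfin : forall t, h (z t.+1) \is a fin_num.
  move=> t; rewrite Hznext; apply: (prox_fin Hhprop _ (Hprox t (l t) (leqnn _)).2).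
  by apply: mulr_gt0; [exact: exprn_gt0 | exact: lt_le_trans m0 (hzlb t)].
pose Fr i := fine (Fo (x i) (z i)).
have Ffin : forall i, (0 < i)%N -> Fo (x i) (z i) = (Fr i)%:E.
  case=> // t _; rewrite /Fr fineK // /Fo /Fobj.
  by rewrite !fin_numD gfin hfin.
have [c0 Hc0] := HFbdd.
have Flb : forall i, (0 < i)%N -> c0 <= Fr i.
  by move=> i i0; rewrite -lee_fin -Ffin.
pose W t := fine (Fmax Fo r x z t).
have Watt' : forall t, (r <= t)%N -> exists i, (t.+1 - r <= i <= t)%N /\
    Fmax Fo r x z t = (Fr i)%:E.
  move=> t rt; rewrite /Fmax.
  have [||i Hi ->] := @bigmax_attained _ _ (-oo%E) (index_iota (t.+1 - r) t.+1)
     (fun i => Fo (x i) (z i)).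
  - by rewrite -size_eq0 size_iota; clear -rt Hr; lia.
  - by move=> i; exact: leNye.
  rewrite mem_index_iota in Hi; exists i; split; first by clear -Hi rt Hr; lia.
  by apply: Ffin; clear -Hi rt Hr; lia.
have Wfin : forall t, (r <= t)%N -> Fmax Fo r x z t = (W t)%:E.
  by move=> t rt; have [i [_ E]] := Watt' t rt; rewrite /W E.
have Watt : forall t, (r <= t)%N -> exists i, (t.+1 - r <= i <= t)%N /\ W t = Fr i.
  by move=> t rt; have [i [Hi E]] := Watt' t rt; exists i; rewrite /W E.
have Wge : forall t i, (r <= t)%N -> (t.+1 - r <= i <= t)%N -> Fr i <= W t.
  move=> t i rt Hi; rewrite -lee_fin -Ffin; last by clear -Hi rt Hr; lia.
  rewrite -Wfin // /Fmax.
  apply: (@le_bigmax_mem _ _ (-oo%E) (index_iota (t.+1 - r) t.+1) (fun i => Fo (x i) (z i)) i).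
  by rewrite mem_index_iota; clear -Hi rt Hr; lia.
pose dx t := enorm (x t.+1 - x t).
pose dz t := enorm (z t.+1 - z t).
pose cc := Num.min sigma1 sigma2 / 2 * m.
have [s10 s11] := andP Hs1; have [s20 s21] := andP Hs2.
have cc0 : 0 < cc by rewrite /cc !mulr_gt0 // lt_min s10 s20.
have Dec : forall t, (r <= t)%N -> Fr t.+1 <= W t - cc * dx t ^+ 2 - cc * dz t ^+ 2.
  move=> t rt; have := Hacc t.
  rewrite -Hxnext -Hznext -/Fo (Ffin t.+1) // (Wfin t rt) -!EFinB lee_fin => H.
  apply: le_trans H _.
  have mn0 : 0 < Num.min sigma1 sigma2 by rewrite lt_min s10 s20.
  have mn1 : Num.min sigma1 sigma2 <= sigma1 by rewrite ge_min lexx.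
  have mn2 : Num.min sigma1 sigma2 <= sigma2 by rewrite ge_min lexx orbT.
  have a1 : Num.min sigma1 sigma2 / 2 <= sigma1 / 2 by lra.
  have a2 : Num.min sigma1 sigma2 / 2 <= sigma2 / 2 by lra.
  have a0 : 0 <= Num.min sigma1 sigma2 / 2 by lra.
  have b1 : m <= rho1 ^+ l t * hx t.
    apply: le_trans (hxlb t) _; rewrite ler_peMl //; first exact: le_trans (ltW m0) (hxlb t).
    by rewrite exprn_ege1 // ltW.
  have b2 : m <= rho2 ^+ l t * hz t.
    apply: le_trans (hzlb t) _; rewrite ler_peMl //; first exact: le_trans (ltW m0) (hzlb t).
    by rewrite exprn_ege1 // ltW.
  have A1 : cc * dx t ^+ 2 <= sigma1 / 2 * (rho1 ^+ l t * hx t) * dx t ^+ 2.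
    by apply: ler_wpM2r; [exact: sqr_ge0 | exact: ler_pM a0 (ltW m0) a1 b1].
  have A2 : cc * dz t ^+ 2 <= sigma2 / 2 * (rho2 ^+ l t * hz t) * dz t ^+ 2.
    by apply: ler_wpM2r; [exact: sqr_ge0 | exact: ler_pM a0 (ltW m0) a2 b2].
  rewrite /dx /dz in A1 A2 *; lra.
have [_ [_ Fub]] := @core_bound _ Fr W dx dz r cc Hr cc0 Wge Watt Dec.
have [K [cK Kx cF]] := HK.
have UCf : forall eps, 0 < eps -> exists2 dl, 0 < dl & forall i, (0 < i)%N ->
      dx i < dl -> dz i < dl -> `|Fr i.+1 - Fr i| < eps.
  move=> eps e0.
  have [|||dl dl0 Hdl] := @UC _ p N K (fun q => Fo q.1 q.2) (fun i => (x i, z i))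
      [set i | (0 < i)%N] (W r) cK cF _ _ _ eps e0.
  - by move=> i _; exact: Kx.
  - move=> i i0; split; first by rewrite /= Ffin.
    by apply: Fub.
  - move=> q /=; rewrite /Fo; apply/negP => /eqP E; have := Hc0 q.1 q.2.
    by rewrite E leeNy_eq.
  exists dl => // i i0 h1 h2.
  exact: (Hdl i.+1 i).
have fin := @core _ Fr W dx dz r cc c0 Hr cc0 Wge Watt Dec Flb
  (fun t => enorm_ge0 _) (fun t => enorm_ge0 _) UCf.
split; apply/cvgrPdist_lt => eps e0; have [N0 HN] := fin eps e0.
  exists N0 => // t /= Nt.
  rewrite sub0r normrN ger0_norm; [exact: (HN t Nt).1 | exact: enorm_ge0].
exists N0 => // t /= Nt.
rewrite sub0r normrN ger0_norm; [exact: (HN t Nt).2 | exact: enorm_ge0].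
Qed.
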